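(* Let $m=2k+1$ with $k\in\mathbb{N}$. For every $\beta\in(\frac{k+1+\sqrt{k^2+6k+5}}{2},m+1]$ there exists $x\in(0,\frac{m}{\beta-1})$ with a unique $\beta$-expansion, i.e. $|\Sigma_{\beta,m}(x)|=1$.
   Context: $\Sigma_{\beta,m}(x)=\{(\epsilon_i)_{i=1}^\infty\in\{0,\ldots,m\}^{\mathbb{N}}:\sum_{i\ge1}\epsilon_i\beta^{-i}=x\}$; its elements are the $\beta$-expansions of $x$. *)

(* Defs.v *)
From Stdlib Require Import Reals.
From Coquelicot Require Import Coquelicot.
Open Scope R_scope.

(* A digit sequence eps : nat -> nat is indexed from 0; eps n plays the role of
   the paper's epsilon_{n+1}, so the term eps n * beta^{-(n+1)} matches
   epsilon_i beta^{-i} with i = n+1. *)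
Definition is_beta_expansion (beta : R) (m : nat) (x : R) (eps : nat -> nat) : Prop :=
  (forall n, (eps n <= m)%nat) /\
  is_series (fun n => INR (eps n) / beta ^ (n + 1)) x.

Definition unique_expansion (beta : R) (m : nat) (x : R) : Prop :=
  exists eps, is_beta_expansion beta m x eps /\
    forall eps', is_beta_expansion beta m x eps' -> eps' = eps.

(* Main.v *)
Require Import Defs.
From Stdlib Require Import Reals Lra Lia Psatz FunctionalExtensionality.
From Coquelicot Require Import Coquelicot.
From Corelib Require Import ssreflect.
Open Scope R_scope.

Section S.
Variable B : R.
Variable m : nat.
Hypothesis HB : 1 < B.

Definition tl (d : nat -> nat) (n : nat) : R :=
  Series (fun i => INR (d (n + i)%nat) / B ^ (i + 1)).

Definition geo (i : nat) : R := INR m * / B * (/ B) ^ i.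

Lemma geo_is : is_series geo (INR m / (B - 1)).
Proof.
  have Hq : Rabs (/ B) < 1.
  { rewrite Rabs_pos_eq. rewrite -Rinv_1; apply Rinv_lt_contravar; lra.
    left; apply Rinv_0_lt_compat; lra. }
  have H := is_series_scal_l (INR m * / B) _ _ (is_series_geom _ Hq).
  replace (INR m / (B - 1)) with (scal (INR m * / B) (/ (1 - / B))).
  exact H.
  rewrite /scal /= /mult /=.
  have H1 : 1 - / B <> 0.
  { intro H0. have : / B = 1 by lra. intro H2.
    have : B = 1 by rewrite -(Rinv_inv B) H2 Rinv_1. lra. }
  field. split; lra.
Qed.

Lemma term_bd (d : nat -> nat) (Hd : forall n, (d n <= m)%nat) n i :
  0 <= INR (d (n + i)%nat) / B ^ (i + 1) <= geo i.
Proof.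
  have Hp : 0 < B ^ (i + 1) by apply pow_lt; lra.
  split. apply Rdiv_le_0_compat; [apply pos_INR|lra].
  rewrite /geo. replace (INR m * / B * (/ B) ^ i) with (INR m / B ^ (i + 1)).
  apply Rmult_le_compat_r. left; apply Rinv_0_lt_compat; lra.
  apply le_INR, Hd.
  rewrite pow_add /= pow_inv. field. split; try lra.
  apply pow_nonzero; lra.
Qed.

Lemma tl_ex (d : nat -> nat) (Hd : forall n, (d n <= m)%nat) n :
  ex_series (fun i => INR (d (n + i)%nat) / B ^ (i + 1)).
Proof.
  apply (@ex_series_le R_AbsRing R_CompleteNormedModule _ geo). intro i. rewrite /norm /= /abs /=.
  have := term_bd d Hd n i. intros [H1 H2]. rewrite Rabs_pos_eq; lra.
  exists (INR m / (B - 1)); apply geo_is.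
Qed.

Lemma tl_bd (d : nat -> nat) (Hd : forall n, (d n <= m)%nat) n :
  0 <= tl d n <= INR m / (B - 1).
Proof.
  split.
  - have := Series_le (fun i => 0 * geo i) (fun i => INR (d (n + i)%nat) / B ^ (i + 1)).
    rewrite Series_scal_l Rmult_0_l. intro H. apply H. intro i. have := term_bd d Hd n i. lra.
    apply tl_ex; auto.
  - rewrite -(is_series_unique _ _ geo_is). apply Series_le.
    intro i; apply term_bd; auto. exists (INR m / (B - 1)); apply geo_is.
Qed.

Lemma tl_rec (d : nat -> nat) (Hd : forall n, (d n <= m)%nat) n :
  tl d n = (INR (d n) + tl d (S n)) / B.
Proof.
  rewrite /tl Series_incr_1; [|apply tl_ex; auto].
  rewrite Nat.add_0_r /=.
  rewrite (Series_ext _ (fun i => / B * (INR (d (S (n + i))) / B ^ (i + 1)))).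
  rewrite Series_scal_l. field. lra.
  intro i. rewrite Nat.add_succ_r /=. field. split. apply pow_nonzero; lra. lra.
Qed.
End S.

Definition epsk (k : nat) (n : nat) : nat := if Nat.even n then S k else k.

Theorem proposition3p7 (k : nat) (beta : R) :
  let m := (2 * k + 1)%nat in
  (INR k + 1 + sqrt (INR k ^ 2 + 6 * INR k + 5)) / 2 < beta ->
  beta <= INR m + 1 ->
  exists x : R, 0 < x /\ x < INR m / (beta - 1) /\ unique_expansion beta m x.
Proof.
  intros m Hlo _.
  set s := sqrt (INR k ^ 2 + 6 * INR k + 5).
  have Hk := pos_INR k.
  have Hs0 : 0 <= s by apply sqrt_pos.
  have Hs2 : s * s = INR k ^ 2 + 6 * INR k + 5 by apply sqrt_sqrt; nra.
  have Hs3 : 2 <= s by nra.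
  fold s in Hlo.
  have HB : 1 < beta by lra.
  have Hq : (INR k + 1) * beta + INR k < beta * beta - 1 by nra.
  have Hm : INR m = 2 * INR k + 1 by rewrite /m plus_INR mult_INR /=; ring.
  set e := epsk k.
  have He : forall n, (e n <= m)%nat.
  { intro n; rewrite /e /epsk /m; destruct (Nat.even n); lia. }
  have Hper : forall n, tl beta e (S (S n)) = tl beta e n.
  { intro n. rewrite /tl. apply Series_ext => i.
    replace (S (S n) + i)%nat with (S (S (n + i))) by lia. reflexivity. }
  have Hr := tl_rec beta m HB e He.
  have He0 : forall n, INR (e (n + n)%nat) = INR k + 1.
  { intro n. rewrite /e /epsk. replace (n + n)%nat with (2 * n)%nat by lia.
    rewrite Nat.even_mul. change (INR (S k) = INR k + 1). rewrite S_INR; lra. }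
  have He1 : forall n, INR (e (S (n + n))) = INR k.
  { intro n. rewrite /e /epsk. replace (S (n + n)) with (S (2 * n)) by lia.
    rewrite Nat.even_succ Nat.odd_mul /=. reflexivity. }
  set a := tl beta e 0. set b := tl beta e 1.
  have Ha : a = (INR k + 1 + b) / beta.
  { rewrite /a Hr. rewrite -(He0 0%nat) //. }
  have Hb : b = (INR k + a) / beta.
  { rewrite /b Hr. rewrite -(He1 0%nat) /=. rewrite -/a.
    by rewrite (Hper 0%nat). }
  have Hab : a * (beta * beta - 1) = (INR k + 1) * beta + INR k.
  { have : a * beta = INR k + 1 + b by rewrite Ha; field; lra.
    have : b * beta = INR k + a by rewrite Hb; field; lra. nra. }
  have Hbb : b * (beta * beta - 1) = INR k * beta + INR k + 1.
  { have : a * beta = INR k + 1 + b by rewrite Ha; field; lra.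
    have : b * beta = INR k + a by rewrite Hb; field; lra. nra. }
  have Hsum : a + b = INR m / (beta - 1).
  { apply (Rmult_eq_reg_r (beta - 1)); [|lra]. rewrite Hm; field_simplify; try lra.
    have : a * beta = INR k + 1 + b by rewrite Ha; field; lra.
    have : b * beta = INR k + a by rewrite Hb; field; lra. nra. }
  have Hpos2 : 0 < beta * beta - 1 by nra.
  have Ha1 : a < 1.
  { apply (Rmult_lt_reg_r (beta * beta - 1)); lra. }
  have Hb1 : b < 1.
  { apply (Rmult_lt_reg_r (beta * beta - 1)); nra. }
  have Ha0 : 0 < a.
  { apply (Rmult_lt_reg_r (beta * beta - 1)); nra. }
  have Hb0 : 0 < b.
  { apply (Rmult_lt_reg_r (beta * beta - 1)); nra. }
  have Htl : forall n, tl beta e (n + n) = a /\ tl beta e (S (n + n)) = b.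
  { induction n as [|n IH]. split; reflexivity.
    replace (S n + S n)%nat with (S (S (n + n))) by lia.
    rewrite !Hper. exact IH. }
  have Hgood : forall n, INR m / (beta - 1) - 1 < tl beta e n < 1.
  { intro n. destruct (Nat.Even_or_Odd n) as [[j ->]|[j ->]].
    - replace (2 * j)%nat with (j + j)%nat by lia. rewrite (proj1 (Htl j)). lra.
    - replace (2 * j + 1)%nat with (S (j + j)) by lia. rewrite (proj2 (Htl j)). lra. }
  exists a. split; [lra|]. split; [lra|].
  exists e. split.
  { split; [exact He|]. apply Series_correct. apply (tl_ex beta m HB e He 0). }
  intros e' [He' Hs'].
  have Ht0 : tl beta e' 0 = a.
  { rewrite /tl. apply is_series_unique. exact Hs'. }
  have Hall : forall n, tl beta e' n = tl beta e n /\ e' n = e n.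
  { have key : forall n, tl beta e' n = tl beta e n -> e' n = e n /\
                tl beta e' (S n) = tl beta e (S n).
    { intros n Hn. rewrite (Hr n) (tl_rec beta m HB e' He' n) in Hn.
      have Hn' : INR (e' n) + tl beta e' (S n) = INR (e n) + tl beta e (S n).
      { apply (Rmult_eq_reg_r (/ beta)). exact Hn.
        apply Rinv_neq_0_compat; lra. }
      have Hg := Hgood (S n). have Hb' := tl_bd beta m HB e' He' (S n).
      destruct (Nat.lt_total (e' n) (e n)) as [Hlt|[Heq|Hgt]].
      - apply le_INR in Hlt. rewrite S_INR in Hlt. lra.
      - split; [exact Heq|]. rewrite Heq in Hn'. lra.
      - apply le_INR in Hgt. rewrite S_INR in Hgt. lra. }
    induction n as [|n IH].
    - split. exact Ht0. apply key. exact Ht0.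
    - have := key n (proj1 IH). intros [_ H]. split; [exact H|]. apply key. exact H. }
  apply functional_extensionality => n. exact (proj2 (Hall n)).
Qed.
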